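(* Let $\mathscr{S}\subset\mathbb{T}^n$ be tropically convex. Then $\mathscr{S}$ is a projected tropical Metzler spectrahedron if and only if its homogenization $\mathscr{S}^h\subset\mathbb{T}^{n+1}$ is a projected tropical Metzler spectrahedron.
   Context: $\mathbb{T}=\mathbb{R}\cup\{-\infty\}$, $-\infty+a=-\infty$. Tropically convex: $\max(\lambda+x,\mu+y)\in X$ for $x,y\in X$, $\lambda,\mu\in\mathbb{T}$, $\max(\lambda,\mu)=0$. Homogenization: $\mathscr{S}^h=\{(x_0,x_0+x)\in\mathbb{T}^{n+1}: x_0\in\mathbb{T},\ x\in\mathscr{S}\}$, where $x_0+x$ has entries $x_0+x_k$. Signed tropical numbers $\mathbb{S}=(\{\pm1\}\times\mathbb{R})\cup\{(0,-\infty)\}$, $(1,a)$ positive, $(-1,a)$ negative, modulus $|(s,a)|=a$; a matrix over $\mathbb{S}$ is tropical Metzler if off-diagonal entries are negative or $(0,-\infty)$. For symmetric tropical Metzler $Q^{(0)},\dots,Q^{(N)}$, with $x_0:=0$, $x\in\mathbb{T}^N$: $Q^{+}_{ii}(x)=\max\{|Q^{(k)}_{ii}|+x_k: Q^{(k)}_{ii}\text{ positive}\}$, $Q^-_{ii}$ likewise with negative entries ($\max\emptyset=-\infty$), $Q_{ij}(x)=\max_k(|Q^{(k)}_{ij}|+x_k)$ ($i\ne j$); the tropical Metzler spectrahedron $\mathcal{S}(Q^{(0)}|Q^{(1)},\dots,Q^{(N)})=\{x\in\mathbb{T}^N: Q^+_{ii}(x)\ge Q^-_{ii}(x)\ \forall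 i,\ Q^+_{ii}(x)+Q^+_{jj}(x)\ge2Q_{ij}(x)\ \forall i\ne j\}$. A subset of $\mathbb{T}^d$ is a projected tropical Metzler spectrahedron if it is the image of a tropical Metzler spectrahedron in $\mathbb{T}^{d+d'}$ ($d'\ge0$) under projection onto the first $d$ coordinates. *)

(* Defs.v *)
From Stdlib Require Import Reals.
From mathcomp Require Import all_boot.
Set Implicit Arguments. Unset Strict Implicit. Unset Printing Implicit Defensive.

Inductive trop : Type := NegInf | Fin (a : R).

(* tropical "multiplication" = ordinary addition, with -oo absorbing *)
Definition tplus (a b : trop) : trop :=
  match a, b with Fin x, Fin y => Fin (Rplus x y) | _, _ => NegInf end.

Definition tmax (a b : trop) : trop :=
  match a, b with
  | NegInf, _ => b
  | _, NegInf => a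
  | Fin x, Fin y => Fin (Rmax x y)
  end.

Definition tle (a b : trop) : Prop :=
  match a, b with
  | NegInf, _ => True
  | Fin _, NegInf => False
  | Fin x, Fin y => Rle x y
  end.

Definition tvec (n : nat) := 'I_n -> trop.

Definition trop_convex (n : nat) (X : tvec n -> Prop) : Prop :=
  forall (x y : tvec n) (lam mu : trop),
    X x -> X y -> tmax lam mu = Fin R0 ->
    X (fun i => tmax (tplus lam (x i)) (tplus mu (y i))).

Definition homogenization (n : nat) (S : tvec n -> Prop) : tvec n.+1 -> Prop :=
  fun z => exists (x0 : trop) (x : tvec n),
    S x /\ z ord0 = x0 /\ forall i : 'I_n, z (lift ord0 i) = tplus x0 (x i).

(* Signed tropical numbers: (1,a), (-1,a), (0,-oo). *)
Inductive strop : Type := SPos (a : R) | SNeg (a : R) | SZero.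

Definition smod (s : strop) : trop :=
  match s with SPos a => Fin a | SNeg a => Fin a | SZero => NegInf end.

Definition smat (m : nat) := 'I_m -> 'I_m -> strop.

Definition symmetric_smat (m : nat) (A : smat m) : Prop :=
  forall i j, A i j = A j i.

Definition metzler_smat (m : nat) (A : smat m) : Prop :=
  forall i j, i != j -> (exists a, A i j = SNeg a) \/ A i j = SZero.

Definition ext0 (N : nat) (x : tvec N) : tvec N.+1 :=
  fun k => match unlift ord0 k with Some k' => x k' | None => Fin R0 end.

Definition Qplus (N m : nat) (Q : 'I_N.+1 -> smat m) (x : tvec N) (i : 'I_m) : trop :=
  \big[tmax/NegInf]_(k < N.+1)
    (match Q k i i with SPos a => tplus (Fin a) (ext0 x k) | _ => NegInf end).

Definition Qminus (N m : nat) (Q : 'I_N.+1 -> smat m) (x : tvec N) (i : 'I_m) : trop :=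
  \big[tmax/NegInf]_(k < N.+1)
    (match Q k i i with SNeg a => tplus (Fin a) (ext0 x k) | _ => NegInf end).

Definition Qoff (N m : nat) (Q : 'I_N.+1 -> smat m) (x : tvec N) (i j : 'I_m) : trop :=
  \big[tmax/NegInf]_(k < N.+1) tplus (smod (Q k i j)) (ext0 x k).

Definition metzler_spectrahedron (N m : nat) (Q : 'I_N.+1 -> smat m) : tvec N -> Prop :=
  fun x =>
    (forall i, tle (Qminus Q x i) (Qplus Q x i)) /\
    (forall i j, i != j ->
       tle (tplus (Qoff Q x i j) (Qoff Q x i j))
           (tplus (Qplus Q x i) (Qplus Q x j))).

Definition projected_metzler_spectrahedron (d : nat) (P : tvec d -> Prop) : Prop :=
  exists (d' m : nat) (Q : 'I_(d + d').+1 -> smat m),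
    (forall k, symmetric_smat (Q k) /\ metzler_smat (Q k)) /\
    forall x : tvec d,
      P x <-> exists y : tvec (d + d'),
        metzler_spectrahedron Q y /\ forall i : 'I_d, x i = y (lshift d' i).

(* Main.v *)
Require Import Defs.
From Stdlib Require Import Reals Lra FunctionalExtensionality Classical.
From HB Require Import structures.
From mathcomp Require Import all_boot zify.
Set Implicit Arguments. Unset Strict Implicit. Unset Printing Implicit Defensive.

Lemma tmaxA : associative tmax.
Proof. case=> [|a] [|b] [|c] //=; by rewrite Rmax_assoc. Qed.
Lemma tmaxC : commutative tmax.
Proof. case=> [|a] [|b] //=; by rewrite Rmax_comm. Qed.
Lemma tmax0 : left_id NegInf tmax.
Proof. by case. Qed.
HB.instance Definition _ := Monoid.isComLaw.Build trop NegInf tmax tmaxA tmaxC tmax0.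

Lemma tle_refl a : tle a a.
Proof. case: a => //= a; lra. Qed.
Lemma tle_trans a b c : tle a b -> tle b c -> tle a c.
Proof. case: a => [|a]; case: b => [|b]; case: c => [|c] //=; lra. Qed.
Lemma tle_anti a b : tle a b -> tle b a -> a = b.
Proof. case: a => [|a]; case: b => [|b] //= *; f_equal; lra. Qed.
Lemma tle_maxl a b : tle a (tmax a b).
Proof. case: a => [|a]; case: b => [|b] //=; try lra; apply Rmax_l. Qed.
Lemma tle_maxr a b : tle b (tmax a b).
Proof. rewrite tmaxC; exact: tle_maxl. Qed.
Lemma tle_lub a b c : tle a c -> tle b c -> tle (tmax a b) c.
Proof. case: a => [|a]; case: b => [|b]; case: c => [|c] //= *; by apply Rmax_lub. Qed.

Section Big.
Variable N : nat.
Implicit Types F G : 'I_N -> trop.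
Lemma big_ub F k : tle (F k) (\big[tmax/NegInf]_(j < N) F j).
Proof. rewrite (bigD1 k) //=; exact: tle_maxl. Qed.
Lemma big_lub F t : (forall k, tle (F k) t) -> tle (\big[tmax/NegInf]_(j < N) F j) t.
Proof. move=> H; apply: (big_ind (fun x => tle x t)) => // x y; exact: tle_lub. Qed.
Lemma big_le F G : (forall k, exists k', tle (F k) (G k')) ->
  tle (\big[tmax/NegInf]_(j < N) F j) (\big[tmax/NegInf]_(j < N) G j).
Proof. move=> H; apply: big_lub => k; case: (H k) => k' Hk'; apply: tle_trans Hk' (big_ub _ _). Qed.
Lemma big_single F k0 : (forall k, k != k0 -> F k = NegInf) ->
  \big[tmax/NegInf]_(j < N) F j = F k0.
Proof.
move=> H; rewrite (bigD1 k0) //= big1; first by case: (F k0).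
by move=> i Hi; apply: H.
Qed.
End Big.

Lemma big_le2 N M (F : 'I_N -> trop) (G : 'I_M -> trop) :
  (forall k, exists k', tle (F k) (G k')) ->
  tle (\big[tmax/NegInf]_(j < N) F j) (\big[tmax/NegInf]_(j < M) G j).
Proof. move=> H; apply: big_lub => k; case: (H k) => k' Hk'; apply: tle_trans Hk' (big_ub _ _). Qed.

Lemma tplusA a b c : tplus a (tplus b c) = tplus (tplus a b) c.
Proof. case: a => [|a]; case: b => [|b]; case: c => [|c] //=; by rewrite Rplus_assoc. Qed.
Lemma tplusC a b : tplus a b = tplus b a.
Proof. case: a => [|a]; case: b => [|b] //=; by rewrite Rplus_comm. Qed.
Lemma tplus0 t : tplus (Fin R0) t = t.
Proof. case: t => //= a; by rewrite Rplus_0_l. Qed.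
Lemma tplusN t : tplus t NegInf = NegInf.
Proof. by case: t. Qed.
Lemma Rplus_max_d c a b : Rplus c (Rmax a b) = Rmax (Rplus c a) (Rplus c b).
Proof. rewrite /Rmax; destruct (Rle_dec a b), (Rle_dec (c+a) (c+b)); lra. Qed.
Lemma tplus_max c a b : tplus c (tmax a b) = tmax (tplus c a) (tplus c b).
Proof. case: c => [|c]; case: a => [|a]; case: b => [|b] //=; by rewrite Rplus_max_d. Qed.
Lemma tplus_cancel r t : tplus (Fin r) (tplus (Fin (- r)) t) = t.
Proof. case: t => //= a; f_equal; lra. Qed.

Lemma big_plus N c (F : 'I_N -> trop) :
  tplus c (\big[tmax/NegInf]_(j < N) F j) = \big[tmax/NegInf]_(j < N) tplus c (F j).
Proof. apply: (big_morph (tplus c)); [exact: tplus_max | exact: tplusN]. Qed.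

Definition gp (s : strop) (t : trop) := match s with SPos a => tplus (Fin a) t | _ => NegInf end.
Definition gm (s : strop) (t : trop) := match s with SNeg a => tplus (Fin a) t | _ => NegInf end.
Definition go (s : strop) (t : trop) := tplus (smod s) t.

Definition G (g : strop -> trop -> trop) N m (Q : 'I_N -> smat m) (u : 'I_N -> trop) (a b : 'I_m) :=
  \big[tmax/NegInf]_(k < N) g (Q k a b) (u k).

Definition hspec N m (Q : 'I_N -> smat m) (u : 'I_N -> trop) : Prop :=
  (forall i, tle (G gm Q u i i) (G gp Q u i i)) /\
  (forall i j, i != j -> tle (tplus (G go Q u i j) (G go Q u i j)) (tplus (G gp Q u i i) (G gp Q u j j))).

Lemma spec_h N m (Q : 'I_N.+1 -> smat m) x : metzler_spectrahedron Q x <-> hspec Q (ext0 x).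
Proof. by []. Qed.

Definition gok g := (forall t, g SZero t = NegInf) /\ (forall s, g s NegInf = NegInf) /\
  (forall s r t, g s (tplus (Fin r) t) = tplus (Fin r) (g s t)).
Lemma gp_ok : gok gp.
Proof. split=> [//|]; split=> [[]//|[a|a|] r [|t] //=]; f_equal; lra. Qed.
Lemma gm_ok : gok gm.
Proof. split=> [//|]; split=> [[]//|[a|a|] r [|t] //=]; f_equal; lra. Qed.
Lemma go_ok : gok go.
Proof. split=> [//|]; split=> [s|[a|a|] r [|t] //=]; try (f_equal; lra); rewrite /go /= ?tplusN //; f_equal; lra. Qed.
Lemma G_shift g N m (Q : 'I_N -> smat m) v r a b : gok g ->
  G g Q (fun k => tplus (Fin r) (v k)) a b = tplus (Fin r) (G g Q v a b).
Proof.
case=> _ [_ H]; rewrite /G big_plus; apply: eq_bigr => k _; exact: H.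
Qed.

Lemma tle_shift r a b : tle (tplus (Fin r) a) (tplus (Fin r) b) <-> tle a b.
Proof. case: a => [|a]; case: b => [|b] //=; split; lra. Qed.
Lemma tle_shift2 r a b c :
  tle (tplus (tplus (Fin r) a) (tplus (Fin r) a)) (tplus (tplus (Fin r) b) (tplus (Fin r) c))
  <-> tle (tplus a a) (tplus b c).
Proof. case: a => [|a]; case: b => [|b]; case: c => [|c] //=; split; lra. Qed.

Lemma hspec_shift N m (Q : 'I_N -> smat m) v r :
  hspec Q (fun k => tplus (Fin r) (v k)) <-> hspec Q v.
Proof.
have E: forall g a b, gok g -> G g Q (fun k => tplus (Fin r) (v k)) a b = tplus (Fin r) (G g Q v a b)
  by move=> g a b Hg; exact: G_shift.
have Ep := fun a b => E gp a b gp_ok.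
have Em := fun a b => E gm a b gm_ok.
have Eo := fun a b => E go a b go_ok.
rewrite /hspec.
split=> [[H1 H2]|[H1 H2]]; split.
- by move=> i; apply/(tle_shift r); rewrite -Ep -Em; apply: H1.
- move=> i j ij; apply/(tle_shift2 r); rewrite -!Ep -Eo; exact: H2.
- by move=> i; rewrite Ep Em; apply/(tle_shift r); apply: H1.
- move=> i j ij; rewrite !Ep Eo; apply/(tle_shift2 r); exact: H2.
Qed.

Definition zmat m : smat m := fun _ _ => SZero.

Definition pull N M m (pi : 'I_N -> 'I_M) (Q : 'I_N -> smat m) : 'I_M -> smat m :=
  fun k => match [pick j | pi j == k] with Some j => Q j | None => fun _ _ => SZero end.

Lemma G_pull g N M m (pi : 'I_N -> 'I_M) (Q : 'I_N -> smat m) u a b :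
  gok g -> injective pi -> G g (pull pi Q) u a b = G g Q (fun j => u (pi j)) a b.
Proof.
case=> H0 _ inj; apply: tle_anti.
- apply: big_lub => k; rewrite /pull; case: pickP => [j /eqP <-|_]; first exact: (big_ub (fun j => g (Q j a b) (u (pi j)))).
  by rewrite H0.
- apply: big_le2 => j; exists (pi j); rewrite /pull; case: pickP => [j' /eqP /inj ->|H].
  + exact: tle_refl.
  + by move: (H j); rewrite eqxx.
Qed.

Lemma hspec_pull N M m (pi : 'I_N -> 'I_M) (Q : 'I_N -> smat m) u :
  injective pi -> (hspec (pull pi Q) u <-> hspec Q (fun j => u (pi j))).
Proof.
move=> inj; rewrite /hspec.
have E: forall g a b, gok g -> G g (pull pi Q) u a b = G g Q (fun j => u (pi j)) a b
  by move=> g a b Hg; exact: G_pull.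
have Ep := fun a b => E gp a b gp_ok.
have Em := fun a b => E gm a b gm_ok.
have Eo := fun a b => E go a b go_ok.
split=> [[H1 H2]|[H1 H2]]; split.
- by move=> i; rewrite -Ep -Em.
- by move=> i j ij; rewrite -!Ep -Eo; apply: H2.
- by move=> i; rewrite Ep Em.
- by move=> i j ij; rewrite !Ep Eo; apply: H2.
Qed.

Lemma pull_ok N M m (pi : 'I_N -> 'I_M) (Q : 'I_N -> smat m) :
  (forall k, symmetric_smat (Q k) /\ metzler_smat (Q k)) ->
  (forall k, symmetric_smat (pull pi Q k) /\ metzler_smat (pull pi Q k)).
Proof.
move=> H k; rewrite /pull; case: pickP => [j _|_]; first exact: H.
by split=> // i j _; right.
Qed.

Definition blk N m1 m2 (Q1 : 'I_N -> smat m1) (Q2 : 'I_N -> smat m2) : 'I_N -> smat (m1 + m2) :=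
  fun k a b => match split a, split b with
  | inl a', inl b' => Q1 k a' b'
  | inr a', inr b' => Q2 k a' b'
  | _, _ => SZero end.

Lemma split_l m n (a : 'I_m) : split (lshift n a) = inl a.
Proof. exact: (unsplitK (inl a)). Qed.
Lemma split_r m n (a : 'I_n) : split (rshift m a) = inr a.
Proof. exact: (unsplitK (inr a)). Qed.

Lemma blk_ok N m1 m2 (Q1 : 'I_N -> smat m1) (Q2 : 'I_N -> smat m2) :
  (forall k, symmetric_smat (Q1 k) /\ metzler_smat (Q1 k)) ->
  (forall k, symmetric_smat (Q2 k) /\ metzler_smat (Q2 k)) ->
  (forall k, symmetric_smat (blk Q1 Q2 k) /\ metzler_smat (blk Q1 Q2 k)).
Proof.
move=> H1 H2 k; split.
- move=> a b; rewrite /blk; case: (split a) => a'; case: (split b) => b' //.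
  + by case: (H1 k) => S _; rewrite S.
  + by case: (H2 k) => S _; rewrite S.
- move=> a b ab; rewrite /blk.
  case: split_ordP => a' Ea; case: split_ordP => b' Eb; subst; try by right.
  + case: (H1 k) => _ M; apply: M; apply: contra ab => /eqP ->; by [].
  + case: (H2 k) => _ M; apply: M; apply: contra ab => /eqP ->; by [].
Qed.

Lemma G_zero g N m (Q : 'I_N -> smat m) u a b :
  gok g -> (forall k, Q k a b = SZero) -> G g Q u a b = NegInf.
Proof. case=> H0 _ HQ; rewrite /G big1 // => k _; by rewrite HQ H0. Qed.

Lemma hspec_blk N m1 m2 (Q1 : 'I_N -> smat m1) (Q2 : 'I_N -> smat m2) u :
  hspec (blk Q1 Q2) u <-> hspec Q1 u /\ hspec Q2 u.
Proof.
have L: forall g a b, G g (blk Q1 Q2) u (lshift m2 a) (lshift m2 b) = G g Q1 u a b.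
  by move=> g a b; rewrite /G /blk ?split_l ?split_r.
have R: forall g a b, G g (blk Q1 Q2) u (rshift m1 a) (rshift m1 b) = G g Q2 u a b.
  by move=> g a b; rewrite /G /blk ?split_l ?split_r.
have Z: forall a b, (forall k, blk Q1 Q2 k a b = SZero) -> G go (blk Q1 Q2) u a b = NegInf.
  by move=> a b; apply: G_zero; exact: go_ok.
split.
- case=> H1 H2; split; split.
  + by move=> i; move: (H1 (lshift m2 i)); rewrite !L.
  + move=> i j ij; move: (H2 (lshift m2 i) (lshift m2 j)); rewrite !L; apply.
    by rewrite eq_lshift.
  + by move=> i; move: (H1 (rshift m1 i)); rewrite !R.
  + move=> i j ij; move: (H2 (rshift m1 i) (rshift m1 j)); rewrite !R; apply.
    by rewrite eq_rshift.
- case=> [[A1 A2] [B1 B2]]; split.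
  + move=> i; case: (split_ordP i) => i' ->; by rewrite ?L ?R.
  + move=> i j; case: (split_ordP i) => i' ->; case: (split_ordP j) => j' ->;
     rewrite ?L ?R ?eq_shift //.
    * by apply: A2.
    * move=> _; rewrite Z //; move=> k; by rewrite /blk ?split_l ?split_r.
    * move=> _; rewrite Z //; move=> k; by rewrite /blk ?split_l ?split_r.
    * by apply: B2.
Qed.

Lemma hspec_trivial N m (Q : 'I_N -> smat m) u :
  (forall k, u k = NegInf \/ forall a b, Q k a b = SZero) -> hspec Q u.
Proof.
move=> H.
have Z: forall g a b, gok g -> G g Q u a b = NegInf.
  move=> g a b [H0 [H1 _]]; rewrite /G big1 // => k _.
  by case: (H k) => E; rewrite ?E ?H0 ?H1.
split; first by move=> i; rewrite (Z gm _ _ gm_ok) (Z gp _ _ gp_ok).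
by move=> i j _; rewrite (Z go _ _ go_ok).
Qed.
Lemma ext0_0 N (x : tvec N) : ext0 x ord0 = Fin R0.
Proof. by rewrite /ext0 unlift_none. Qed.
Lemma ext0_lift N (x : tvec N) i : ext0 x (lift ord0 i) = x i.
Proof. by rewrite /ext0 liftK. Qed.

Definition Wm M n (k0 kw : 'I_M) (kz : 'I_n -> 'I_M) : 'I_M -> smat n.+1 :=
  fun k a b => match unlift ord0 a, unlift ord0 b with
  | None, None => if k == k0 then SPos R0 else SZero
  | Some _, Some _ => if a == b then (if k == kw then SPos R0 else SZero) else SZero
  | None, Some i => if k == kz i then SNeg R0 else SZero
  | Some i, None => if k == kz i then SNeg R0 else SZero
  end.

Section W.
Variables (M n : nat) (k0 kw : 'I_M) (kz : 'I_n -> 'I_M).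
Local Notation W := (Wm k0 kw kz).

Lemma W_ok k : symmetric_smat (W k) /\ metzler_smat (W k).
Proof.
split.
- move=> a b; rewrite /Wm; case: unliftP => [i|] _; case: unliftP => [j|] _ //.
  by rewrite eq_sym.
- move=> a b; rewrite /Wm; case: unliftP => [i|] Ha; case: unliftP => [j|] Hb; subst.
  + by move=> /negbTE ->; right.
  + by move=> _; case: (k == kz i); [left; exists R0|right].
  + by move=> _; case: (k == kz j); [left; exists R0|right].
  + by rewrite eqxx.
Qed.

Lemma W_zero k : k != k0 -> k != kw -> (forall i, k != kz i) -> forall a b, W k a b = SZero.
Proof.
move=> h1 h2 h3 a b; rewrite /Wm; case: (unlift ord0 a) => [i|]; case: (unlift ord0 b) => [j|];
  rewrite ?(negbTE h1) ?(negbTE h2) ?(negbTE (h3 _)) //; by case: (_ == _).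
Qed.

Lemma G_W_diag0 u : G gp W u ord0 ord0 = tplus (Fin R0) (u k0).
Proof.
rewrite /G (big_single (k0 := k0)) /Wm ?unlift_none ?eqxx //.
by move=> k /negbTE ->.
Qed.
Lemma G_W_diag1 u i : G gp W u (lift ord0 i) (lift ord0 i) = tplus (Fin R0) (u kw).
Proof.
rewrite /G (big_single (k0 := kw)) /Wm ?liftK ?eqxx //.
by move=> k /negbTE ->.
Qed.
Lemma G_W_off u i : G go W u ord0 (lift ord0 i) = tplus (Fin R0) (u (kz i)).
Proof.
rewrite /G (big_single (k0 := (kz i))) /Wm ?liftK ?unlift_none ?eqxx //.
by move=> k /negbTE ->.
Qed.
Lemma G_W_off' u i : G go W u (lift ord0 i) ord0 = tplus (Fin R0) (u (kz i)).
Proof.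
rewrite /G (big_single (k0 := (kz i))) /Wm ?liftK ?unlift_none ?eqxx //.
by move=> k /negbTE ->.
Qed.
Lemma G_W_off2 u i j : i != j -> G go W u (lift ord0 i) (lift ord0 j) = NegInf.
Proof.
move=> ij; apply: G_zero; first exact: go_ok.
by move=> k; rewrite /Wm !liftK (inj_eq (@lift_inj _ ord0)) (negbTE ij).
Qed.
Lemma G_W_m u a : G gm W u a a = NegInf.
Proof.
rewrite /G big1 // => k _; rewrite /Wm.
case: unliftP => [i|] _; by rewrite ?eqxx; case: (_ == _).
Qed.

Lemma hspec_W u : hspec W u <->
  forall i, tle (tplus (u (kz i)) (u (kz i))) (tplus (u k0) (u kw)).
Proof.
split.
- case=> _ H i; move: (H ord0 (lift ord0 i) (neq_lift _ _)).
  by rewrite G_W_off G_W_diag0 G_W_diag1 !tplus0.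
- move=> H; split; first by move=> i; rewrite G_W_m.
  move=> a b; case: (unliftP ord0 a) => [i|] ->; case: (unliftP ord0 b) => [j|] ->.
  + rewrite (inj_eq (@lift_inj _ ord0)) => ij; by rewrite G_W_off2.
  + by rewrite G_W_off' G_W_diag0 G_W_diag1 !tplus0 (tplusC (u kw)).
  + by rewrite G_W_off G_W_diag0 G_W_diag1 !tplus0.
  + by rewrite eqxx.
Qed.
End W.

Lemma empty_proj d (P : tvec d -> Prop) : (forall x, ~ P x) -> projected_metzler_spectrahedron P.
Proof.
move=> H; exists 0, 1, (fun k => fun _ _ => if k == ord0 then SNeg R0 else SZero); split.
- move=> k; split=> // i j _; case: (k == ord0); [left; exists R0|right] => //.
- move=> x; split=> [/H //|[y [[Hy _] _]]]; move: (Hy ord0).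
  have ->: Qminus (fun k : 'I_(d + 0).+1 => fun _ _ : 'I_1 => if k == ord0 then SNeg R0 else SZero) y ord0
     = tplus (Fin R0) (ext0 y ord0).
    rewrite /Qminus (big_single (k0 := ord0)) ?eqxx //; by move=> k /negbTE ->.
  rewrite /Qplus big1 ?ext0_0 //; by move=> k _; case: (k == ord0).
Qed.
Lemma tplus_r0 r : tplus (Fin r) (Fin R0) = Fin r.
Proof. by rewrite /= Rplus_0_r. Qed.

Lemma tle_negsq a b : tle (tplus a a) (tplus NegInf b) -> a = NegInf.
Proof. by case: a. Qed.

Section DirB.
Variables (n d' : nat).
Local Notation NV := (n.+1 + d'.+1).

Lemma rho_leq : (n + d').+1 <= NV.
Proof. lia. Qed.
Definition rho (k : 'I_(n + d').+1) : 'I_NV := widen_ord rho_leq k.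
Definition piB (k : 'I_(n + d').+1) : 'I_NV.+1 := lift ord0 (rho k).
Definition wv : 'I_NV := @ord_max (n + d'.+1).
Definition kz0 : 'I_NV.+1 := lift ord0 (rho ord0).
Definition kzB (i : 'I_n) : 'I_NV.+1 := lift ord0 (rho (lift ord0 (lshift d' i))).
Definition kwB : 'I_NV.+1 := lift ord0 wv.

Lemma piB_inj : injective piB.
Proof. move=> a b /lift_inj /(congr1 val) /= ab; exact: val_inj. Qed.

Lemma rho_wv k : rho k != wv.
Proof. rewrite -(inj_eq val_inj) /=; have := ltn_ord k; lia. Qed.

Lemma rho_inord k : inord (rho k) = k.
Proof. apply: val_inj; rewrite /= inordK //; exact: ltn_ord. Qed.

Lemma L0 : lshift d'.+1 (ord0 : 'I_n.+1) = rho ord0.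
Proof. exact: val_inj. Qed.
Lemma L1 i : lshift d'.+1 (lift ord0 i : 'I_n.+1) = rho (lift ord0 (lshift d' i)).
Proof. exact: val_inj. Qed.

End DirB.

Lemma dirB n (S : tvec n -> Prop) :
  projected_metzler_spectrahedron S -> projected_metzler_spectrahedron (homogenization S).
Proof.
case: (classic (exists x, S x)) => [[xs Sxs]|Hne]; last first.
  move=> _; apply: empty_proj => z [x0 [x [Sx _]]]; apply: Hne; by exists x.
case=> d' [m [Q [HQ Hiff]]].
pose W := Wm (kz0 n d') (kwB n d') (@kzB n d').
exists d'.+1, (m + n.+1), (blk (pull (@piB n d') Q) W); split.
  apply: blk_ok; [exact: pull_ok | move=> k; exact: W_ok].
move=> z; split.
- case=> x0 [x [Sx [Hz0 Hz]]].
  case: (Hiff x) => /(_ Sx) [y [Hy Hxy]] _.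
  case: x0 Hz0 Hz => [|r] Hz0 Hz.
  + exists (fun _ => NegInf); split.
    * apply/spec_h/hspec_trivial => k; case: (unliftP ord0 k) => [j|] ->.
        by left; rewrite ext0_lift.
      right=> a b; rewrite /blk.
      case: (split a) => a'; case: (split b) => b' //.
        rewrite /pull; case: pickP => [j Hj|//].
        by move: Hj; rewrite /piB eq_sym (negbTE (neq_lift _ _)).
      by rewrite /W W_zero.
    * move=> i; case: (unliftP ord0 i) => [i'|] ->; by rewrite ?Hz ?Hz0.
  + pose B := \big[tmax/NegInf]_(i < n) tplus (z (lift ord0 i)) (z (lift ord0 i)).
    pose y'' := fun t : 'I_(n.+1 + d'.+1) =>
      if t == wv n d' then tplus (Fin (- r)) B else tplus (Fin r) (ext0 y (inord t)).
    have Ey k : y'' (rho k) = tplus (Fin r) (ext0 y k).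
      by rewrite /y'' (negbTE (rho_wv k)) rho_inord.
    have Ezi i : y'' (rho (lift ord0 (lshift d' i))) = z (lift ord0 i).
      by rewrite Ey ext0_lift -Hxy Hz.
    exists y''; split.
    * apply/spec_h/hspec_blk; split.
        apply/hspec_pull; first exact: piB_inj.
        have ->: (fun j => ext0 y'' (piB j)) = (fun j => tplus (Fin r) (ext0 y j)).
          by apply: functional_extensionality => j; rewrite /piB ext0_lift Ey.
        exact/hspec_shift/spec_h.
      apply/hspec_W => i.
      rewrite /kzB /kz0 /kwB !ext0_lift Ezi Ey ext0_0 tplus_r0.
      rewrite /y'' eqxx tplus_cancel; exact: (big_ub (fun i => tplus (z (lift ord0 i)) (z (lift ord0 i)))).
    * move=> i; case: (unliftP ord0 i) => [i'|] ->.
        by rewrite L1 Ezi.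
      by rewrite L0 Ey ext0_0 tplus_r0.
- case=> y'' [Hy Hz].
  case/spec_h/hspec_blk: Hy => /hspec_pull Hp /hspec_W HW.
  have {}Hp := Hp (@piB_inj n d').
  have Ez0 : z ord0 = y'' (rho ord0) by rewrite Hz L0.
  have Ezi i : z (lift ord0 i) = y'' (rho (lift ord0 (lshift d' i))) by rewrite Hz L1.
  case Ec: (y'' (rho ord0)) => [|r].
  + exists NegInf, xs; split=> //; split; first by rewrite Ez0.
    move=> i; move: (HW i); rewrite /kzB /kz0 /kwB !ext0_lift Ec => /tle_negsq.
    by rewrite Ezi => ->.
  + pose yo := fun s : 'I_(n + d') => tplus (Fin (- r)) (y'' (rho (lift ord0 s))).
    have Hyo : metzler_spectrahedron Q yo.
      apply/spec_h/(hspec_shift _ _ r).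
      have <-: (fun j => ext0 y'' (piB j)) = (fun j => tplus (Fin r) (ext0 yo j)); last exact: Hp.
      apply: functional_extensionality => j; rewrite /piB ext0_lift.
      case: (unliftP ord0 j) => [j'|] ->.
        by rewrite ext0_lift /yo tplus_cancel.
      by rewrite ext0_0 tplus_r0.
    exists (Fin r), (fun i => yo (lshift d' i)); split.
      apply/Hiff; by exists yo.
    split; first by rewrite Ez0.
    by move=> i; rewrite /yo tplus_cancel Ezi.
Qed.
Section E.
Variables (M : nat) (kz : 'I_M.+1).
Definition Em : 'I_M.+1 -> smat 2 := fun k a b =>
  if a == b then
    (if a == ord0 then (if k == ord0 then SPos R0 else if k == kz then SNeg R0 else SZero)
     else (if k == ord0 then SNeg R0 else if k == kz then SPos R0 else SZero))
  else SZero.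

Lemma E_ok k : symmetric_smat (Em k) /\ metzler_smat (Em k).
Proof.
split.
- move=> a b; rewrite /Em eq_sym; case: eqP => // ->; done.
- by move=> a b /negbTE; rewrite /Em => ->; right.
Qed.

Hypothesis kz0 : kz != ord0.

Lemma hspec_E u : u ord0 = Fin R0 -> (hspec Em u <-> u kz = Fin R0).
Proof.
move=> u0.
have Z: forall a b, a != b -> G go Em u a b = NegInf.
  move=> a b ab; apply: G_zero; first exact: go_ok.
  by move=> k; rewrite /Em (negbTE ab).
have P0 : G gp Em u ord0 ord0 = tplus (Fin R0) (u ord0).
  rewrite /G (big_single (k0 := ord0)) /Em ?eqxx //.
  move=> k /negbTE ->; by case: (k == kz).
have M0 : G gm Em u ord0 ord0 = tplus (Fin R0) (u kz).
  rewrite /G (big_single (k0 := kz)) /Em ?eqxx ?(negbTE kz0) //.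
  move=> k /negbTE ->; by case: (k == ord0).
have P1 : G gp Em u ord_max ord_max = tplus (Fin R0) (u kz).
  rewrite /G (big_single (k0 := kz)) /Em ?eqxx ?(negbTE kz0) //.
  move=> k /negbTE ->; by case: (k == ord0).
have M1 : G gm Em u ord_max ord_max = tplus (Fin R0) (u ord0).
  rewrite /G (big_single (k0 := ord0)) /Em ?eqxx //.
  move=> k /negbTE ->; by case: (k == kz).
split.
- case=> [H _]; move: (H ord0) (H ord_max); rewrite P0 M0 P1 M1 !tplus0 u0.
  move=> h1 h2; exact: tle_anti.
- move=> Hk; split.
  + have E2: forall i : 'I_2, i = ord0 \/ i = ord_max.
      by case=> [[|[|i]] Hi] //; [left|right]; apply: val_inj.
    move=> i; case: (E2 i) => ->; rewrite ?P0 ?M0 ?P1 ?M1 !tplus0 u0 Hk; exact: tle_refl.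
  + by move=> i j ij; rewrite Z.
Qed.
End E.

Section DirA.
Variables (n d' : nat).
Definition tauN (s : nat) := if s == 0 then n else if s <= n then s - 1 else s.
Definition sigN (t : nat) := if t < n then t.+1 else if t == n then 0 else t.
Lemma tau_lt (s : 'I_(n.+1 + d')) : tauN s < n + d'.+1.
Proof. rewrite /tauN; have := ltn_ord s; case: eqP => [->|h0]; first lia. case: (leqP s n); lia. Qed.
Lemma sigm_lt (t : 'I_(n + d'.+1)) : sigN t < n.+1 + d'.
Proof. rewrite /sigN; have := ltn_ord t; case: (ltnP t n) => h; first lia. case: eqP; lia. Qed.
Definition tau (s : 'I_(n.+1 + d')) : 'I_(n + d'.+1) := Ordinal (tau_lt s).
Definition sigm (t : 'I_(n + d'.+1)) : 'I_(n.+1 + d') := Ordinal (sigm_lt t).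

Lemma sigm_tau s : sigm (tau s) = s.
Proof.
apply: val_inj; rewrite /= /sigN /tauN; have := ltn_ord s.
case: (nat_of_ord s) => [|s'] /=; first by rewrite ltnn eqxx.
case: (ltnP s' n) => h _; repeat (case: ifP => ?); lia. Qed.
Lemma tau_inj : injective tau.
Proof. move=> a b /(congr1 sigm); by rewrite !sigm_tau. Qed.

Lemma tau_l i : tau (lshift d' (lift ord0 i : 'I_n.+1)) = lshift d'.+1 i.
Proof. apply: val_inj; rewrite /= /tauN /= /bump leq0n add1n; have := ltn_ord i; repeat (case: ifP => ?); lia. Qed.
Lemma sigm_l i : sigm (lshift d'.+1 i) = lshift d' (lift ord0 i : 'I_n.+1).
Proof. apply: val_inj; rewrite /= /sigN /=; by rewrite ltn_ord. Qed.
Lemma lshift0 : lshift d' (ord0 : 'I_n.+1) = ord0.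
Proof. exact: val_inj. Qed.

Definition piA (k : 'I_(n.+1 + d').+1) : 'I_(n + d'.+1).+1 :=
  match unlift ord0 k with None => ord0 | Some s => lift ord0 (tau s) end.

Lemma piA_inj : injective piA.
Proof.
move=> a b; rewrite /piA; case: (unliftP ord0 a) => [i|] ->; case: (unliftP ord0 b) => [j|] ->;
  rewrite ?liftK ?unlift_none //.
- by move/lift_inj/tau_inj => ->.
Qed.

Lemma ext0_piA (y : tvec (n + d'.+1)) k : ext0 y (piA k) = ext0 (fun s => y (tau s)) k.
Proof.
rewrite /piA; case: (unliftP ord0 k) => [i|] ->; rewrite ?liftK ?unlift_none.
- by rewrite !ext0_lift.
- by rewrite !ext0_0.
Qed.
End DirA.

Lemma dirA n (S : tvec n -> Prop) :
  projected_metzler_spectrahedron (homogenization S) -> projected_metzler_spectrahedron S.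
Proof.
case=> d' [m [Q [HQ Hiff]]].
pose kz : 'I_(n + d'.+1).+1 := lift ord0 (@tau n d' ord0).
have kzn : kz != ord0 by rewrite eq_sym neq_lift.
exists d'.+1, (m + 2), (blk (pull (@piA n d') Q) (Em kz)); split.
  apply: blk_ok; [exact: pull_ok | move=> k; exact: E_ok].
move=> x; split.
- move=> Sx.
  have Hh : homogenization S (ext0 x).
    exists (Fin R0), x; split=> //; split; first exact: ext0_0.
    by move=> i; rewrite ext0_lift tplus0.
  case/Hiff: Hh => y [Hy Hxy].
  exists (fun t => y (sigm t)); split.
  + apply/spec_h/hspec_blk; split.
      apply/hspec_pull; first exact: piA_inj.
      have ->: (fun j => ext0 (fun t => y (sigm t)) (piA j)) = ext0 y.
        apply: functional_extensionality => j; rewrite ext0_piA.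
        congr ext0; apply: functional_extensionality => s; by rewrite sigm_tau.
      exact/spec_h.
    apply/hspec_E => //; first exact: ext0_0.
    by rewrite /kz ext0_lift sigm_tau -lshift0 -Hxy ext0_0.
  + by move=> i; rewrite sigm_l -Hxy ext0_lift.
- case=> y'' [Hy Hx].
  case/spec_h/hspec_blk: Hy => /hspec_pull Hp HE.
  have {}Hp := Hp (@piA_inj n d').
  have {}HE : ext0 y'' kz = Fin R0 by apply/(hspec_E kzn (ext0_0 _)).
  pose y := fun s => y'' (@tau n d' s).
  have Hy : metzler_spectrahedron Q y.
    apply/spec_h; have <-: (fun j => ext0 y'' (piA j)) = ext0 y; last exact: Hp.
    by apply: functional_extensionality => j; rewrite ext0_piA.
  have : homogenization S (fun i => y (lshift d' i)) by apply/Hiff; exists y.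
  case=> x0 [x' [Sx' [H0 Hi]]].
  have ex : x = x'.
    apply: functional_extensionality => i.
    move: (Hi i); rewrite /y tau_l -H0 /y lshift0 -Hx.
    move: HE; rewrite /kz ext0_lift => -> ; by rewrite tplus0.
  by rewrite ex.
Qed.

Theorem mainTheorem16 (n : nat) (S : tvec n -> Prop) :
  trop_convex S ->
  (projected_metzler_spectrahedron S <->
   projected_metzler_spectrahedron (homogenization S)).
Proof. move=> _; split; [exact: dirB | exact: dirA]. Qed.
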